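(* Let $\sigma>0$, $\lambda>0$, $\nu\in(0,\pi/2)$ and $\kappa_1\in(0,1)$. Then there exists $\hat\varepsilon=\hat\varepsilon(\lambda,\nu)>0$ such that for any $\varepsilon\in(0,\hat\varepsilon)$ there exists $\delta_\varepsilon\in(0,\kappa_1)$ with the following property: for any $\kappa\in(0,\delta_\varepsilon]$, the solution $(x(t),y(t))$ of \[ x'=y,\qquad y'=-\lambda a^+(t)g(x) \] with $x(0)=\kappa$, $y(0)=0$ satisfies \[ -\nu\le\arctan\Bigl(\frac{y(t)}{x(t)}\Bigr)\le0\quad\text{for all }t\in[0,\sigma]. \]
   Context: $a\in L^1(0,\sigma)$ with positive part $a^+$. $g\colon\mathbb{R}\to[0,+\infty)$ is the extension by zero outside $[0,1]$ of a locally Lipschitz continuous function $g\colon[0,1]\to[0,+\infty)$ with $g(0)=g(1)=0$, $g(s)>0$ for $0<s<1$ and $\lim_{s\to0^+}g(s)/s=0$. Solutions are in the Carathéodory sense on $[0,\sigma]$. *)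

(* Defs.v *)
From HB Require Import structures.
From mathcomp Require Import all_boot all_order all_algebra.
From mathcomp Require Import all_classical all_reals all_analysis.
Set Implicit Arguments. Unset Strict Implicit. Unset Printing Implicit Defensive.
Import Order.TTheory GRing.Theory Num.Theory.
Import numFieldNormedType.Exports.
Local Open Scope classical_set_scope.
Local Open Scope ring_scope.

Definition pospart {R : realType} (a : R -> R) : R -> R :=
  fun t => Num.max (a t) 0.

Definition locally_lipschitz_on01 {R : realType} (g : R -> R) : Prop :=
  forall s, 0 <= s <= 1 -> exists r : R, exists L : R, 0 < r /\
    forall u v, 0 <= u <= 1 -> 0 <= v <= 1 -> `|u - s| < r -> `|v - s| < r ->
      `|g u - g v| <= L * `|u - v|.

Definition admissible_g {R : realType} (g : R -> R) : Prop :=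
  locally_lipschitz_on01 g /\
  [/\ (forall s, 0 <= s <= 1 -> 0 <= g s),
      (forall s, (s < 0) || (1 < s) -> g s = 0),
      g 0 = 0 /\ g 1 = 0,
      (forall s, 0 < s < 1 -> 0 < g s) &
      (fun s => g s / s) @ 0^'+ --> (0 : R)].

(* Caratheodory solution on [0,sigma] of x' = y, y' = - lam a^+(t) g(x),
   x(0) = x0, y(0) = y0, written in the equivalent integral form:
   y and t |-> a^+(t) g(x(t)) are Lebesgue integrable on [0,sigma] and
   x, y are the corresponding indefinite integrals. *)
Definition caratheodory_solution {R : realType} (lam : R) (a g : R -> R)
    (sigma x0 y0 : R) (x y : R -> R) : Prop :=
  [/\ (@lebesgue_measure R).-integrable `[0, sigma] (EFin \o y),
      (@lebesgue_measure R).-integrable `[0, sigma]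
         (EFin \o (fun s => pospart a s * g (x s))) &
      forall t, 0 <= t <= sigma ->
        x t = x0 + Rintegral (@lebesgue_measure R) `[0, t] y /\
        y t = y0 - lam * Rintegral (@lebesgue_measure R) `[0, t]
                         (fun s => pospart a s * g (x s))].

(* Main.v *)
Require Import Defs.
From HB Require Import structures.
From mathcomp Require Import all_boot all_order all_algebra.
From mathcomp Require Import all_classical all_reals all_analysis.
Import Order.TTheory GRing.Theory Num.Theory.
Import numFieldNormedType.Exports.
Local Open Scope classical_set_scope.
Local Open Scope ring_scope.
From mathcomp Require Import ring lra.

Lemma cst_int (R : realType) (t k : R) :
  (@lebesgue_measure R).-integrable `[0, t] (EFin \o cst k).
Proof.
apply/integrableP; split; first by apply/measurable_realfun.measurable_EFinP; exact: measurable_cst.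
rewrite (eq_integral (cst `|k|%:E)); last by move=> x _.
rewrite integral_cst //= lebesgue_measure_itv /=.
case: ifP => _; last by rewrite mule0 ltry.
by rewrite -EFinD -EFinM ltry.
Qed.

Lemma lim_ex (R : realType) (g : R -> R) (eta : R) : 0 < eta ->
  (fun s => g s / s) @ 0^'+ --> (0 : R) ->
  exists r : R, 0 < r /\ forall s, 0 < s < r -> g s / s < eta.
Proof.
move=> e0 /cvgrPdist_lt /(_ eta e0) [r /= r0 Hr].
exists r; split => // s /andP[s0 sr].
have := Hr s; rewrite /= sub0r normrN gtr0_norm // => /(_ sr s0).
by rewrite sub0r normrN => /(le_lt_trans (ler_norm _)).
Qed.

Lemma Rint_mono (R : realType) (f : R -> R) (t sigma : R) :
  0 <= t <= sigma ->
  (@lebesgue_measure R).-integrable `[0, sigma] (EFin \o f) ->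
  (forall s, 0 <= s <= sigma -> 0 <= f s) ->
  Rintegral (@lebesgue_measure R) `[0, t] f <=
  Rintegral (@lebesgue_measure R) `[0, sigma] f.
Proof.
move=> /andP[t0 ts] fi f0.
have := @Rintegral_itvB R f (BLeft 0) (BRight sigma) t fi.
rewrite !bnd_simp => /(_ t0 ts) H.
rewrite -subr_ge0 H; apply: Rintegral_ge0 => s /=; rewrite in_itv /= => /andP[ts' ss].
apply: f0; rewrite ss andbT; apply: le_trans t0 (ltW ts').
Qed.

Lemma leb_len (R : realType) (t : R) : 0 <= t ->
  fine ((@lebesgue_measure R) `[0, t]) = t.
Proof.
move=> t0; rewrite (@lebesgue_measure_itv R `[0, t]%R) /=.
case: (ltP 0 t) => [tp|tz].
  by rewrite lte_fin tp /= subr0.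
have -> : t = 0 by apply/le_anti; rewrite tz t0.
by rewrite ltxx.
Qed.

Theorem lemma2p3 (R : realType) (lam nu : R) :
  0 < lam -> 0 < nu < pi / 2 ->
  exists epshat : R, 0 < epshat /\
  forall (sigma kappa1 : R) (a g : R -> R),
    0 < sigma -> 0 < kappa1 < 1 ->
    (@lebesgue_measure R).-integrable `[0, sigma] (EFin \o a) ->
    admissible_g g ->
    forall eps : R, 0 < eps < epshat ->
    exists delta : R, 0 < delta < kappa1 /\
    forall kappa : R, 0 < kappa <= delta ->
    forall x y : R -> R,
      caratheodory_solution lam a g sigma kappa 0 x y ->
      forall t, 0 <= t <= sigma ->
        x t != 0 /\ - nu <= atan (y t / x t) <= 0.
Proof.
move=> lam0 /andP[nu0 nupi].
have tnu : 0 < tan nu.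
  rewrite /tan divr_gt0 //; first by apply: sin_gt0_pihalf; rewrite nu0 nupi.
  by apply: cos_gt0_pihalf; rewrite nupi andbT (lt_trans _ nu0) // oppr_lt0 divr_gt0 // pi_gt0.
exists 1; split => //.
move=> sigma k1 a g s0 /andP[k10 k11] ia [Lip [g0 gout [g00 g10] gpos glim]] eps _.
pose A := Rintegral (@lebesgue_measure R) `[0, sigma] (fun s => `|a s|).
have A0 : 0 <= A by apply: Rintegral_ge0 => s _.
pose e := Num.min (1 / (2 * sigma)) (tan nu / 2).
have e0 : 0 < e.
  rewrite lt_min; apply/andP; split; apply: divr_gt0 => //.
  by apply: mulr_gt0.
have e1 : e <= 1 / (2 * sigma) by rewrite ge_min lexx.
have e2 : e <= tan nu / 2 by rewrite ge_min lexx orbT.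
pose eta := e / (lam * (A + 1)).
have A10 : 0 < A + 1 by lra.
have eta0 : 0 < eta by rewrite divr_gt0 ?mulr_gt0.
have etaA : lam * eta * A <= e.
  have -> : lam * eta * A = e * (A / (A + 1)).
    by rewrite /eta; field; apply/andP; split; rewrite gt_eqF.
  apply: (@le_trans _ _ (e * 1)); last by rewrite mulr1.
  by rewrite ler_pM2l // ler_pdivrMr // mul1r; lra.
have [r [r0 Hr]] := @lim_ex R g eta eta0 glim.
exists (Num.min (r / 2) (k1 / 2)); split.
  rewrite lt_min !divr_gt0 //=; rewrite gt_min; apply/orP; right; lra.
move=> kap /andP[kap0 kapd] x y [iy ih sol] t /andP[t0 ts].
have kr : kap < r by move: kapd; rewrite le_min => /andP[H _]; lra.
have k1' : kap < 1 by move: kapd; rewrite le_min => /andP[_ H]; lra.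
have gnn : forall u, 0 <= g u.
  move=> u; case: (ltP u 0) => [u0|u0]; first by rewrite gout ?u0.
  case: (leP u 1) => [u1|u1]; first by apply: g0; rewrite u0 u1.
  by rewrite gout ?u1 ?orbT.
have ppos : forall s, 0 <= pospart a s by move=> s; rewrite /pospart le_max lexx orbT.
have hnn : forall s, 0 <= pospart a s * g (x s) by move=> s; rewrite mulr_ge0.
have ypos : forall s, 0 <= s <= sigma -> y s <= 0.
  move=> s /(sol s) [_ ->]; rewrite sub0r oppr_le0; apply: mulr_ge0; first exact: ltW.
  by apply: Rintegral_ge0 => u _.
have xle : forall s, 0 <= s <= sigma -> x s <= kap.
  move=> s /[dup] ss /(sol s) [-> _]; rewrite gerDl.
  apply: (@le_trans _ _ (Rintegral (@lebesgue_measure R) `[0, s] (cst 0))); last first.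
    by rewrite Rintegral_cst // mul0r.
  move: ss => /andP[ss0 sss].
  apply: le_Rintegral => //.
  - apply: integrableS iy => //; apply: subset_itvl; rewrite bnd_simp //.
  - exact: cst_int.
  - move=> u /=; rewrite in_itv /= => /andP[u0 us]; apply: ypos.
    by rewrite u0 (le_trans us sss).
have gle : forall s, 0 <= s <= sigma -> g (x s) <= eta * kap.
  move=> s ss; have xs := xle s ss.
  case: (ltgtP (x s) 0) => [xl|xg|xe].
  - by rewrite gout ?xl // mulr_ge0 ?ltW.
  - have := Hr (x s); rewrite xg /= => /(_ (le_lt_trans xs kr)).
    rewrite ltr_pdivrMr // => H; apply: (le_trans (ltW H)).
    by rewrite ler_pM2l.
  - by rewrite xe g00 mulr_ge0 ?ltW.
have intle : forall s, 0 <= s <= sigma ->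
    Rintegral (@lebesgue_measure R) `[0, s] (fun u => pospart a u * g (x u))
    <= eta * kap * A.
  move=> s /[dup] ss /andP[ss0 sss].
  have iabs : (@lebesgue_measure R).-integrable `[0, sigma] (EFin \o (fun u => `|a u|)).
    have := integrable_abse ia.
    by apply: eq_integrable => // u _.
  apply: (@le_trans _ _ (Rintegral (@lebesgue_measure R) `[0, s] (fun u => eta * kap * `|a u|))).
    apply: le_Rintegral => //.
    - apply: integrableS ih => //; apply: subset_itvl; rewrite bnd_simp //.
    - apply: integrableS; last first.
        exact: (integrableZl _ (eta * kap) iabs).
      + apply: subset_itvl; rewrite bnd_simp //.
      + by [].
      + by [].
    - move=> u /=; rewrite in_itv /= => /andP[u0 us].
      have uu : 0 <= u <= sigma by rewrite u0 (le_trans us sss).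
      rewrite [_ * `|a u|]mulrC; apply: ler_pM => //.
        by rewrite /pospart ge_max normr_ge0 ler_norm.
      exact: gle.
  rewrite RintegralZl //; last first.
    apply: integrableS iabs => //; apply: subset_itvl; rewrite bnd_simp //.
  rewrite ler_pM2l; last by apply: mulr_gt0.
  by apply: Rint_mono => // u _.
pose M := lam * eta * kap * A.
have yge : forall s, 0 <= s <= sigma -> - M <= y s.
  move=> s /[dup] ss /(sol s) [_ ->].
  rewrite sub0r lerN2 (_ : M = lam * (eta * kap * A)); last by rewrite /M !mulrA.
  by rewrite ler_pM2l //; apply: intle.
have xge : kap - t * M <= x t.
  have tt : 0 <= t <= sigma by rewrite t0 ts.
  have [-> _] := sol t tt.
  rewrite lerD2l.
  have -> : - (t * M) = Rintegral (@lebesgue_measure R) `[0, t] (cst (- M)).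
    by rewrite Rintegral_cst // leb_len // mulrC mulNr.
  apply: le_Rintegral => //.
  - exact: cst_int.
  - apply: integrableS iy => //; apply: subset_itvl; rewrite bnd_simp //.
  - move=> u /=; rewrite in_itv /= => /andP[u0 us]; apply: yge.
    by rewrite u0 (le_trans us ts).
have M0 : 0 <= M.
  rewrite /M; apply: mulr_ge0 => //; apply: mulr_ge0; last exact: ltW.
  by apply: mulr_ge0; apply: ltW.
have Me : M <= e * kap.
  have -> : M = lam * eta * A * kap by rewrite /M; ring.
  exact: (ler_wpM2r (ltW kap0) etaA).
have se : sigma * e <= 1 / 2.
  apply: (@le_trans _ _ (sigma * (1 / (2 * sigma)))); first by rewrite ler_pM2l.
  by rewrite le_eqVlt; apply/orP; left; apply/eqP; field; rewrite gt_eqF.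
have tt : 0 <= t <= sigma by rewrite t0 ts.
have yt := yge t tt.
have yt0 := ypos t tt.
have ek : e * kap <= tan nu / 2 * kap by exact: (ler_wpM2r (ltW kap0) e2).
have tM : t * M <= kap / 2.
  have h1 : t * M <= sigma * M by exact: (ler_wpM2r M0 ts).
  have h2 : sigma * M <= sigma * (e * kap) by exact: (ler_wpM2l (ltW s0) Me).
  have h3 : sigma * (e * kap) <= 1 / 2 * kap.
    by rewrite mulrA; exact: (ler_wpM2r (ltW kap0) se).
  lra.
have xt : kap / 2 <= x t by lra.
have xt0 : 0 < x t by lra.
split; first by rewrite gt_eqF.
apply/andP; split.
- have Hn : atan (tan nu) = nu.
    apply: tanK; rewrite in_itv /= nupi andbT (lt_trans _ nu0) //.
    by rewrite oppr_lt0 divr_gt0 // pi_gt0.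
  rewrite -{1}Hn -atanN; apply: le_atan.
  rewrite ler_pdivlMr //.
  have h4 : tan nu * (kap / 2) <= tan nu * x t by exact: (ler_wpM2l (ltW tnu) xt).
  lra.
- rewrite -(atan0 R); apply: le_atan.
  by rewrite ler_pdivrMr // mul0r.
Qed.
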